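(* Let $n\ge 2$. The $V_n$-graded Hilbert functions of the $R/J_n$-modules $\langle p_n\rangle$ and $\langle p^+_{n,i}\rangle$, $i=1,\dots,n$, take only the values $0$ and $1$.
   Context: Let $\mathbbm{k}$ be a field, $[n]=\{1,\dots,n\}$, $R=\mathbbm{k}[x_{ij}:1\le i\le j\le n]$ with $x_{ij}=x_{ji}$; exponent vectors in $\mathbb{N}^{\binom{n+1}{2}}$ with basis $e_{ij}=e_{ji}$. $V_n$ is the $n\times\binom{n+1}{2}$ matrix whose column indexed by $jk$ is $e_j+e_k\in\mathbb{Z}^n$; $R$ is $\mathbb{N}^n$-graded by $\deg x_{jk}=e_j+e_k$ (the $V_n$-grading), and the $V_n$-graded Hilbert function of a graded module $M$ is $\mathbf b\mapsto\dim_{\mathbbm{k}}M_{\mathbf b}$. For $\mathbf b\in\mathbb{N}^n$, $V_n^{-1}[\mathbf b]=\{u\in\mathbb{N}^{\binom{n+1}{2}}:V_nu=\mathbf b\}$. $J_n$ is the ($V_n$-homogeneous) ideal generated by the principal $2$-minors $x_{ii}x_{jj}-x_{ij}^2$. With $[ij|kl]:=e_{ik}+e_{jl}-e_{il}-e_{jk}$, $L'_n$ is the lattice generated by the $[ij|ij]$; two points of a fiber are equivalent if their difference lies in $L'_n$. Define $p_n=\prod_{1\le i<j\le n-1}(x_{ij}x_{nn}+x_{in}x_{jn})$. If $n$ is odd, $p^+_{n,i}\in R/J_n$ is the sum of $x^{\mathbf a}$ over the equivalence classes $\mathbf a$ of $V_n^{-1}[(n-2,\dots,n-2)+e_i]$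 modulo $L'_n$; if $n$ is even, $p^+_{n,i}:=p^+_n$ for all $i$, the sum of $x^{\mathbf a}$ over the equivalence classes of $V_n^{-1}[(n-2,\dots,n-2)]$ modulo $L'_n$. *)

(* Defs.v *)
From HB Require Import structures.
From mathcomp Require Import all_boot all_order all_algebra.
From mathcomp Require Import mpoly.
Set Implicit Arguments. Unset Strict Implicit. Unset Printing Implicit Defensive.
Import Order.TTheory GRing.Theory Num.Theory.
Local Open Scope ring_scope.

(* Index set of the variables x_{ij} = x_{ji}, 1 <= i <= j <= n, written
   0-based: unordered pairs {i,j} of 'I_n represented as (i,j) with i <= j. *)
Definition vidx (n : nat) := {p : 'I_n * 'I_n | (p.1 <= p.2)%N}.

Definition nvar (n : nat) : nat := #|{: vidx n}|.

Notation R K n := ({mpoly K[nvar n]}).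
Notation mono n := ('X_{1..nvar n}).

Definition is_pair n (t : vidx n) (i j : nat) : bool :=
  (((val t).1 : nat) == minn i j) && (((val t).2 : nat) == maxn i j).

(* x_{ij} (= x_{ji}); 0-based indices; equals 0 if i or j >= n (never used so) *)
Definition x (K : fieldType) (n : nat) (i j : nat) : R K n :=
  \sum_(t : vidx n | is_pair t i j) 'X_(enum_rank t).

Definition vdeg n (u : mono n) (k : 'I_n) : nat :=
  \sum_(t : vidx n) u (enum_rank t) * (((val t).1 == k) + ((val t).2 == k))%N.

Definition vhomog (K : fieldType) (n : nat) (b : 'I_n -> nat) (f : R K n) : Prop :=
  forall u : mono n, f@_u != 0 -> forall k, vdeg u k = b k.

Definition minor2 (K : fieldType) (n : nat) (i j : nat) : R K n :=
  x K n i i * x K n j j - x K n i j ^+ 2.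

Definition inJ (K : fieldType) (n : nat) (f : R K n) : Prop :=
  exists c : 'I_n -> 'I_n -> R K n,
    f = \sum_(i < n) \sum_(j < n | (i < j)%N) c i j * minor2 K n i j.

(* f represents an element of the R/J_n-submodule <p> of R/J_n,
   i.e. f in pR + J_n *)
Definition inGen (K : fieldType) (n : nat) (p f : R K n) : Prop :=
  exists a g : R K n, f = a * p + g /\ inJ g.

Definition indep_family (K : fieldType) (n : nat) (p : R K n) (b : 'I_n -> nat) (d : nat)
    (f : 'I_d -> R K n) : Prop :=
  (forall l, vhomog b (f l) /\ inGen p (f l)) /\
  (forall c : 'I_d -> K, inJ (\sum_(l < d) c l *: f l) -> forall l, c l = 0).

(* V_n-graded Hilbert function of the R/J_n-module <p> (p homogeneous):
   hilb p b h  <->  dim_k <p>_b = h, the dimension being the maximal size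
   of a linearly independent family in <p>_b. *)
Definition hilb (K : fieldType) (n : nat) (p : R K n) (b : 'I_n -> nat) (h : nat) : Prop :=
  (exists f : 'I_h -> R K n, indep_family p b f) /\
  ~ (exists f : 'I_h.+1 -> R K n, indep_family p b f).

Definition hilb01 (K : fieldType) (n : nat) (p : R K n) : Prop :=
  forall b : 'I_n -> nat, hilb p b 0 \/ hilb p b 1.

(* p_n = prod_{1 <= i < j <= n-1} (x_ij x_nn + x_in x_jn)  (0-based below) *)
Definition pn (K : fieldType) (n : nat) : R K n :=
  \prod_(0 <= j < n.-1) \prod_(0 <= i < j)
     (x K n i j * x K n n.-1 n.-1 + x K n i n.-1 * x K n j n.-1).

Definition brk n (i j : 'I_n) (t : vidx n) : int :=
  (is_pair t i i)%:Z + (is_pair t j j)%:Z - (is_pair t i j)%:Z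
  - (is_pair t j i)%:Z.

(* u ~ v  iff  u - v in L'_n (the lattice generated by the [ij|ij]) *)
Definition equivL n (u v : mono n) : Prop :=
  exists c : 'I_n -> 'I_n -> int, forall t : vidx n,
    (u (enum_rank t))%:Z - (v (enum_rank t))%:Z
    = \sum_(i < n) \sum_(j < n) c i j * brk i j t.

Definition in_fiber n (b : 'I_n -> nat) (u : mono n) : Prop :=
  forall k, vdeg u k = b k.

(* S is a set of representatives of the classes of V_n^{-1}[b] modulo L'_n;
   then sum_{s in S} x^s is the sum of x^a over the classes a (well defined
   in R/J_n). *)
Definition class_reps n (b : 'I_n -> nat) (S : seq (mono n)) : Prop :=
  [/\ uniq S, forall s, s \in S -> in_fiber b s,
      forall u, in_fiber b u -> exists2 s, s \in S & equivL u s
    & forall s t, s \in S -> t \in S -> equivL s t -> s = t].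

(* the degree of p^+_{n,i}: (n-2,...,n-2) + e_i if n odd, (n-2,...,n-2)
   if n even *)
Definition plus_deg n (i : 'I_n) : 'I_n -> nat :=
  fun k => if odd n then (n - 2 + (k == i))%N else (n - 2)%N.

(* Main.v *)
Require Import Defs.
From HB Require Import structures.
From mathcomp Require Import all_boot all_order all_algebra.
From mathcomp Require Import mpoly.
From mathcomp Require Import zify ring.
From Stdlib Require Import Classical_Prop.
Set Implicit Arguments. Unset Strict Implicit. Unset Printing Implicit Defensive.
Import Order.TTheory GRing.Theory Num.Theory.


Section Comb.
Variable n : nat.
Local Notation V := (vidx n).

Definition rk (t : V) : 'I_(nvar n) := enum_rank t.

Lemma mkv_proof (i j : 'I_n) :
  ((if (i <= j)%N then (i,j) else (j,i)).1 <= (if (i <= j)%N then (i,j) else (j,i)).2)%N.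
Proof. by case: ifP => //= /negbT; rewrite -ltnNge => /ltnW. Qed.

Definition mkv (i j : 'I_n) : V := exist (fun p : 'I_n * 'I_n => (p.1 <= p.2)%N) _ (mkv_proof i j).

Lemma mkv1 i j : (((val (mkv i j)).1 : nat) = minn i j)%N.
Proof. by rewrite /minn /mkv /=; case: ltngtP => h //=; rewrite h. Qed.
Lemma mkv2 i j : (((val (mkv i j)).2 : nat) = maxn i j)%N.
Proof. by rewrite /maxn /mkv /=; case: ltngtP => h //=; rewrite h. Qed.

Lemma vidx_eqP (t s : V) : (t == s) = (((val t).1 : nat) == (val s).1) && (((val t).2 : nat) == (val s).2).
Proof.
case: t s => [[a b] h] [[c d] h'] /=.
apply/eqP/andP => [[-> ->] //|[/eqP e1 /eqP e2]].
apply: val_inj => /=. by congr pair; apply: val_inj.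
Qed.

Lemma mkvC i j : mkv i j = mkv j i.
Proof. by apply/eqP; rewrite vidx_eqP !mkv1 !mkv2 minnC maxnC !eqxx. Qed.

Lemma mkv_val t : mkv (val t).1 (val t).2 = t.
Proof.
apply/eqP; rewrite vidx_eqP mkv1 mkv2.
case: t => [[a b] /= h] /=. by rewrite (minn_idPl h) (maxn_idPr h) !eqxx.
Qed.

Lemma mkv_eq i j a b : (mkv i j == mkv a b) = ((minn i j == minn a b) && (maxn i j == maxn a b)).
Proof. by rewrite vidx_eqP !mkv1 !mkv2. Qed.

Lemma is_pairE t (i j : 'I_n) : is_pair t i j = (t == mkv i j).
Proof. by rewrite vidx_eqP mkv1 mkv2. Qed.

Definition U (u : 'X_{1..nvar n}) (i j : 'I_n) := u (rk (mkv i j)).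

Lemma UC u i j : U u i j = U u j i.
Proof. by rewrite /U mkvC. Qed.

Lemma sum_fst (g : V -> nat) (k : 'I_n) :
  \sum_(t : V) g t * (((val t).1 == k) : nat) = \sum_(c : 'I_n) g (mkv k c) * (k <= c).
Proof.
transitivity (\sum_(t : V) \sum_(c : 'I_n) g t * (((val t).2 == c) && ((val t).1 == k))).
  apply: eq_bigr => t _.
  rewrite (bigD1 (val t).2) //= eqxx /= big1 ?addn0 // => c /negbTE hc.
  by rewrite eq_sym hc muln0.
rewrite exchange_big /=; apply: eq_bigr => c _.
rewrite (bigD1 (mkv k c)) //= big1 ?addn0.
  rewrite /=; case: leqP => h /=; first by rewrite !eqxx muln1.
  have -> : (k == c) = false by apply/negbTE/eqP => e; rewrite e ltnn in h.
  by rewrite muln0.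
move=> t ht; case: eqP => [e2|]; case: eqP => [e1|] //= *; rewrite ?muln0 //.
move: ht; suff -> : t = mkv k c by rewrite eqxx.
apply/eqP; rewrite vidx_eqP mkv1 mkv2 e1 e2.
have := valP t; rewrite e1 e2 => h. by rewrite (minn_idPl h) (maxn_idPr h) !eqxx.
Qed.

Lemma sum_snd (g : V -> nat) (k : 'I_n) :
  \sum_(t : V) g t * (((val t).2 == k) : nat) = \sum_(c : 'I_n) g (mkv c k) * (c <= k).
Proof.
transitivity (\sum_(t : V) \sum_(c : 'I_n) g t * (((val t).1 == c) && ((val t).2 == k))).
  apply: eq_bigr => t _.
  rewrite (bigD1 (val t).1) //= eqxx /= big1 ?addn0 // => c /negbTE hc.
  by rewrite eq_sym hc muln0.
rewrite exchange_big /=; apply: eq_bigr => c _.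
rewrite (bigD1 (mkv c k)) //= big1 ?addn0.
  rewrite /=; case: leqP => h /=; first by rewrite !eqxx muln1.
  have -> : (k == c) = false by apply/negbTE/eqP => e; rewrite e ltnn in h.
  by rewrite muln0.
move=> t ht; case: eqP => [e2|]; case: eqP => [e1|] //= *; rewrite ?muln0 //.
move: ht; suff -> : t = mkv c k by rewrite eqxx.
apply/eqP; rewrite vidx_eqP mkv1 mkv2 e1 e2.
have := valP t; rewrite e1 e2 => h. by rewrite (minn_idPl h) (maxn_idPr h) !eqxx.
Qed.

Lemma vdegU u k : vdeg u k = (U u k k).*2 + \sum_(c | c != k) U u k c.
Proof.
rewrite /vdeg.
rewrite (eq_bigr (fun t => u (rk t) * ((val t).1 == k) + u (rk t) * ((val t).2 == k))); last first.
  by move=> t _; rewrite mulnDr.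
rewrite big_split /= sum_fst sum_snd.
rewrite -big_split /=.
rewrite (eq_bigr (fun c => U u k c + U u k c * (c == k))); last first.
  move=> c _; rewrite (mkvC c k) -mulnDr /U.
  have -> : ((k <= c) + (c <= k) = 1 + (c == k))%N.
    case: (ltngtP k c) => h.
    - have : c != k by apply/eqP => e; rewrite e ltnn in h.
      by move/negbTE ->.
    - have : c != k by apply/eqP => e; rewrite e ltnn in h.
      by move/negbTE ->.
    - by rewrite (val_inj h) eqxx.
  by rewrite mulnDr muln1.
have E : (\sum_(c < n) U u k c * (c == k) = U u k k)%N.
  rewrite (bigD1 k) //= eqxx muln1 big1 ?addn0 // => c /negbTE ->.
  by rewrite muln0.
rewrite big_split /= E (bigD1 k) //=; lia.
Qed.

End Comb.


Section Mono.
Variable n : nat.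
Local Notation V := (vidx n).
Local Notation mono := ('X_{1..nvar n}).

Lemma rk_eq (s t : V) : (rk s == rk t) = (s == t).
Proof. exact: (inj_eq (@enum_rank_inj _)). Qed.

Lemma vdegD (u w : mono) k : vdeg (u + w)%MM k = vdeg u k + vdeg w k.
Proof. by rewrite /vdeg -big_split; apply: eq_bigr => t _; rewrite mnmDE mulnDl. Qed.

Lemma vdeg0 k : vdeg (0%MM : mono) k = 0.
Proof. by rewrite /vdeg big1 // => t _; rewrite mnm0E. Qed.

Lemma vdeg1 (t : V) k : vdeg (U_(rk t))%MM k = ((val t).1 == k) + ((val t).2 == k).
Proof.
rewrite /vdeg (bigD1 t) //= mnm1E eqxx mul1n big1 ?addn0 // => s hs.
by rewrite mnm1E -/(rk t) -/(rk s) rk_eq eq_sym (negbTE hs).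
Qed.

Lemma vdeg1mkv (i j : 'I_n) k : vdeg (U_(rk (mkv i j)))%MM k = (i == k) + (j == k).
Proof.
rewrite vdeg1.
have e1 := mkv1 i j; have e2 := mkv2 i j.
rewrite /minn /maxn in e1 e2.
case: (ltngtP i j) e1 e2 => h e1 e2.
- have -> : (val (mkv i j)).1 = i by apply: val_inj.
  have -> : (val (mkv i j)).2 = j by apply: val_inj.
  done.
- have -> : (val (mkv i j)).1 = j by apply: val_inj.
  have -> : (val (mkv i j)).2 = i by apply: val_inj.
  by rewrite addnC.
- have hij : i = j by apply: val_inj.
  subst j.
  have -> : (val (mkv i i)).1 = i by apply: val_inj.
  have -> : (val (mkv i i)).2 = i by apply: val_inj.
  done.
Qed.

Lemma UD (u w : mono) i j : U (u + w)%MM i j = U u i j + U w i j.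
Proof. by rewrite /U mnmDE. Qed.

Lemma U1 (s : V) i j : U (U_(rk s))%MM i j = (s == mkv i j).
Proof. by rewrite /U mnm1E rk_eq. Qed.

Definition Mof (u : mono) := \sum_(t : V | (val t).1 != (val t).2) u (rk t).

Lemma MD u w : Mof (u + w)%MM = Mof u + Mof w.
Proof. by rewrite /Mof -big_split; apply: eq_bigr => t _; rewrite mnmDE. Qed.

Lemma M1 (s : V) : Mof (U_(rk s))%MM = ((val s).1 != (val s).2).
Proof.
rewrite /Mof; case: (boolP ((val s).1 != (val s).2)) => h.
  rewrite (bigD1 s) //= mnm1E eqxx big1 ?addn0 // => t /andP [_ ht].
  by rewrite mnm1E rk_eq eq_sym (negbTE ht).
rewrite big1 // => t ht; rewrite mnm1E rk_eq.
by case: eqP => // e; subst t; rewrite ht in h.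
Qed.

Lemma mkv_off (i j : 'I_n) : ((val (mkv i j)).1 != (val (mkv i j)).2) = (i != j).
Proof.
apply/idP/idP.
  apply: contra => /eqP ->; rewrite -(inj_eq val_inj) /=.
  by rewrite mkv1 mkv2 minnn maxnn.
move=> h; apply/negP; rewrite -(inj_eq val_inj) /= mkv1 mkv2 => /eqP.
move: h; rewrite -(inj_eq val_inj) /minn /maxn.
case: (ltngtP i j) => [h|h|h] //= _ e; by rewrite e ltnn in h.
Qed.

Lemma U_mkv_eq (i j a b : 'I_n) : (i < j)%N -> (a < b)%N ->
  (mkv i j == mkv a b) = ((i == a) && (j == b)).
Proof.
move=> h1 h2; rewrite mkv_eq /minn /maxn h1 h2.
by rewrite -!(inj_eq val_inj).
Qed.

Lemma mkv_diag_off (i a b : 'I_n) : (a < b)%N -> (mkv i i == mkv a b) = false.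
Proof.
move=> h; rewrite mkv_eq minnn maxnn /minn /maxn h.
apply/negbTE; apply/negP => /andP [/eqP e1 /eqP e2].
by rewrite -e1 -e2 ltnn in h.
Qed.

End Mono.


Section Alg.
Variable K : fieldType.
Variable n : nat.
Local Notation V := (vidx n).
Local Notation mono := ('X_{1..nvar n}).
Local Notation RR := {mpoly K[nvar n]}.
Local Open Scope ring_scope.

Lemma x_ord (i j : 'I_n) : x K n i j = 'X_(rk (mkv i j)).
Proof.
rewrite /x (eq_bigl (pred1 (mkv i j))) ?big_pred1_eq // => t.
exact: is_pairE.
Qed.

Lemma inJ0 : inJ (0 : RR).
Proof. by exists (fun _ _ => 0); rewrite big1 // => i _; rewrite big1 // => j _; rewrite mul0r. Qed.

Lemma inJD (f g : RR) : inJ f -> inJ g -> inJ (f + g).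
Proof.
move=> [c ->] [d ->]; exists (fun i j => c i j + d i j).
rewrite -big_split /=; apply: eq_bigr => i _; rewrite -big_split /=.
by apply: eq_bigr => j _; rewrite mulrDl.
Qed.

Lemma inJM (q f : RR) : inJ f -> inJ (q * f).
Proof.
move=> [c ->]; exists (fun i j => q * c i j).
rewrite mulr_sumr; apply: eq_bigr => i _; rewrite mulr_sumr.
by apply: eq_bigr => j _; rewrite mulrA.
Qed.

Lemma inJN (f : RR) : inJ f -> inJ (- f).
Proof. by move=> h; rewrite -mulN1r; apply: inJM. Qed.

Lemma inJB (f g : RR) : inJ f -> inJ g -> inJ (f - g).
Proof. by move=> hf hg; apply: inJD => //; apply: inJN. Qed.

Lemma inJZ (c : K) (f : RR) : inJ f -> inJ (c *: f).
Proof. by move=> h; rewrite -mul_mpolyC; apply: inJM. Qed.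

Lemma inJ_sum (I : Type) (r : seq I) (P : pred I) (F : I -> RR) :
  (forall i, P i -> inJ (F i)) -> inJ (\sum_(i <- r | P i) F i).
Proof.
move=> h; elim: r => [|a r IH]; first by rewrite big_nil; exact: inJ0.
rewrite big_cons; case: ifP => // Pa; exact: inJD (h _ Pa) IH.
Qed.

Lemma inJ_gen (i j : 'I_n) (q : RR) : (i < j)%N -> inJ (q * minor2 K n i j).
Proof.
move=> hij; exists (fun a b => if (a == i) && (b == j) then q else 0).
rewrite (bigD1 i) //= [X in _ + X]big1 ?addr0; last first.
  move=> a ha; rewrite big1 // => b _; by rewrite (negbTE ha) /= mul0r.
rewrite (bigD1 j) //= !eqxx /= big1 ?addr0 // => b /andP [_ hb].
by rewrite (negbTE hb) mul0r.
Qed.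

Lemma brkE (i j : 'I_n) (t : V) : brk i j t =
  (t == mkv i i)%:Z + (t == mkv j j)%:Z - (t == mkv i j)%:Z - (t == mkv j i)%:Z.
Proof. by rewrite /brk !is_pairE. Qed.

Lemma equivL_refl (u : mono) : equivL u u.
Proof.
exists (fun _ _ => 0%R) => t; rewrite subrr big1 // => i _.
by rewrite big1 // => j _; rewrite mul0r.
Qed.

Lemma equivL_sym (u v : mono) : equivL u v -> equivL v u.
Proof.
move=> [c hc]; exists (fun i j => - c i j) => t.
rewrite -opprB hc -sumrN; apply: eq_bigr => i _; rewrite -sumrN.
by apply: eq_bigr => j _; rewrite mulNr.
Qed.

Lemma equivL_trans (u w v : mono) : equivL u w -> equivL w v -> equivL u v.
Proof.
move=> [c hc] [d hd]; exists (fun i j => c i j + d i j) => t.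
have -> : (u (rk t))%:Z - (v (rk t))%:Z
   = ((u (rk t))%:Z - (w (rk t))%:Z) + ((w (rk t))%:Z - (v (rk t))%:Z).
  by rewrite addrA subrK.
rewrite [in X in X + _]hc hd -big_split /=; apply: eq_bigr => i _.
by rewrite -big_split /=; apply: eq_bigr => j _; rewrite mulrDl.
Qed.

Lemma equivL_move (w : mono) (i j : 'I_n) : (i < j)%N ->
  equivL (w + U_(rk (mkv i j)) + U_(rk (mkv i j)))%MM
         (w + U_(rk (mkv i i)) + U_(rk (mkv j j)))%MM.
Proof.
move=> hij; exists (fun a b => if (a == i) && (b == j) then (-1)%R else 0%R) => t.
have -> : \sum_(a < n) \sum_(b < n)
    (if (a == i) && (b == j) then (-1)%R else 0%R) * brk a b t = - brk i j t.
  rewrite (bigD1 i) //= [X in _ + X]big1 ?addr0; last first.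
    by move=> a ha; rewrite big1 // => b _; rewrite (negbTE ha) /= mul0r.
  rewrite (bigD1 j) //= !eqxx /= big1 ?addr0 ?mulN1r //.
  by move=> b hb; rewrite (negbTE hb) mul0r.
rewrite brkE (mkvC j i) !mnmDE !mnm1E !rk_eq.
rewrite (eq_sym (mkv i j)) (eq_sym (mkv i i)) (eq_sym (mkv j j)).
rewrite !PoszD; lia.
Qed.

Lemma equivL_par (u v : mono) : equivL u v ->
  forall t : V, (val t).1 != (val t).2 -> odd (u (rk t)) = odd (v (rk t)).
Proof.
move=> [c hc] t ht.
have [z hz] : exists z : int, (u (rk t))%:Z - (v (rk t))%:Z = 2%:Z * z.
  exists (- \sum_(i < n) \sum_(j < n) c i j * (t == mkv i j)%:Z).
  rewrite hc mulrN mulr_sumr -sumrN; apply: eq_bigr => i _.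
  rewrite mulr_sumr -sumrN; apply: eq_bigr => j _.
  have d1 : forall a : 'I_n, (t == mkv a a) = false.
    move=> a; apply/negbTE; apply: contra ht => /eqP ->.
    by apply/negPn; rewrite mkv_off eqxx.
  rewrite brkE !d1 (mkvC j i); lia.
have := modn2 (u (rk t)); have := modn2 (v (rk t)).
case: (odd (u (rk t))); case: (odd (v (rk t))) => //= h1 h2; lia.
Qed.

Definition sim (u v : mono) :=
  (forall k, vdeg u k = vdeg v k) /\
  (forall i j : 'I_n, (i < j)%N -> odd (U u i j) = odd (U v i j)).

Lemma reduce_step (u : mono) (i j : 'I_n) : (i < j)%N -> (1 < U u i j)%N ->
  exists u' : mono, [/\ (forall k, vdeg u' k = vdeg u k),
     (forall a b : 'I_n, (a < b)%N -> odd (U u' a b) = odd (U u a b)),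
     (Mof u' < Mof u)%N, inJ ('X_[u] - 'X_[u'] : RR) & equivL u u'].
Proof.
move=> hij hu.
have hne : i != j by apply/eqP => e; rewrite e ltnn in hij.
pose e := rk (mkv i j).
pose w : mono := [multinom (u s - 2 * (s == e))%N | s < nvar n].
have hw : u = (w + U_(e) + U_(e))%MM.
  apply/mnmP => s; rewrite !mnmDE mnmE mnm1E.
  move: hu; rewrite /U -/e.
  case: eqP => [->|ne1].
    by case: eqP => [_|ne2] //; lia.
  by case: eqP => [E|_]; [case: ne1 | lia].
exists (w + U_(rk (mkv i i)) + U_(rk (mkv j j)))%MM; split.
- by move=> k; rewrite hw !vdegD !vdeg1mkv; lia.
- move=> a b hab; rewrite hw !UD !U1 !mkv_diag_off //= !addn0.
  by rewrite -addnA addnn oddD odd_double addbF.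
- rewrite hw !MD !M1 !mkv_off hne !eqxx /=; lia.
- have -> : 'X_[u] - 'X_[(w + U_(rk (mkv i i)) + U_(rk (mkv j j)))%MM]
            = (- 'X_[w]) * minor2 K n i j :> RR.
    rewrite /minor2 !x_ord hw !mpolyXD -/e; ring.
  exact: inJ_gen.
- by rewrite hw; exact: equivL_move.
Qed.

Lemma U_ext (u v : mono) : (forall a b, U u a b = U v a b) -> u = v.
Proof.
move=> h; apply/mnmP => s.
rewrite -[s](enum_valK) -[enum_val s](mkv_val).
exact: h.
Qed.

Lemma class_both (u v : mono) : sim u v -> inJ ('X_[u] - 'X_[v] : RR) /\ equivL u v.
Proof.
suff H : forall N u v, (Mof u + Mof v < N)%N -> sim u v ->
    inJ ('X_[u] - 'X_[v] : RR) /\ equivL u v.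
  by move=> s; apply: (H (Mof u + Mof v).+1).
elim=> [|N IH] {}u {}v // hN [hd hp].
case: (boolP [exists i : 'I_n, exists j : 'I_n, (i < j)%N && (1 < U u i j)%N]).
  move=> /existsP [i /existsP [j /andP [hij hu]]].
  have [u' [d1 p1 m1 j1 e1]] := reduce_step hij hu.
  have [j2 e2] : inJ ('X_[u'] - 'X_[v] : RR) /\ equivL u' v.
    apply: IH; first by lia.
    split; first by move=> k; rewrite d1 hd.
    by move=> a b hab; rewrite p1 // hp.
  split; last exact: equivL_trans e1 e2.
  have -> : 'X_[u] - 'X_[v] = ('X_[u] - 'X_[u']) + ('X_[u'] - 'X_[v]) :> RR.
    by rewrite addrA subrK.
  exact: inJD.
move=> /existsPn hu.
case: (boolP [exists i : 'I_n, exists j : 'I_n, (i < j)%N && (1 < U v i j)%N]).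
  move=> /existsP [i /existsP [j /andP [hij hv]]].
  have [v' [d1 p1 m1 j1 e1]] := reduce_step hij hv.
  have [j2 e2] : inJ ('X_[u] - 'X_[v'] : RR) /\ equivL u v'.
    apply: IH; first by lia.
    split; first by move=> k; rewrite d1 hd.
    by move=> a b hab; rewrite p1 // hp.
  split; last exact: equivL_trans e2 (equivL_sym e1).
  have -> : 'X_[u] - 'X_[v] = ('X_[u] - 'X_[v']) - ('X_[v] - 'X_[v']) :> RR.
    by rewrite opprB addrA subrK.
  exact: inJB.
move=> /existsPn hv.
have hoff : forall a b : 'I_n, (a < b)%N -> U u a b = U v a b.
  move=> a b hab.
  have := hu a; move/existsPn/(_ b); rewrite hab /= -leqNgt => h1.
  have := hv a; move/existsPn/(_ b); rewrite hab /= -leqNgt => h2.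
  have := hp a b hab; move: h1 h2.
  case: (U u a b) => [|[|]] //; case: (U v a b) => [|[|]] //.
have hne : forall a b : 'I_n, a != b -> U u a b = U v a b.
  move=> a b hab; case: (ltngtP a b) => h.
  - exact: hoff.
  - by rewrite UC (UC v); apply: hoff.
  - by move: hab; rewrite (val_inj h) eqxx.
have -> : u = v; last by rewrite subrr; split; [exact: inJ0 | exact: equivL_refl].
apply: U_ext => a b; case: (eqVneq a b) => [<-|]; last exact: hne.
have := hd a; rewrite !vdegU.
have hs : (\sum_(c | c != a) U u a c = \sum_(c | c != a) U v a c)%N.
  by apply: eq_bigr => c hc; apply: hne; rewrite eq_sym.
rewrite hs; lia.
Qed.

Lemma class_J (u v : mono) : sim u v -> inJ ('X_[u] - 'X_[v] : RR).
Proof. by move/class_both => []. Qed.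

Lemma class_E (u v : mono) : sim u v -> equivL u v.
Proof. by move/class_both => []. Qed.

End Alg.


Lemma odd_sum_eq (I : Type) (r : seq I) (P : pred I) (F G : I -> nat) :
  (forall i, P i -> odd (F i) = odd (G i)) ->
  odd (\sum_(i <- r | P i) F i) = odd (\sum_(i <- r | P i) G i).
Proof.
move=> h; apply: (big_ind2 (fun x y => odd x = odd y)) => //.
by move=> x1 x2 y1 y2 e1 e2; rewrite !oddD e1 e2.
Qed.

Section Pn.
Variable K : fieldType.
Variable m : nat.
Local Notation n := m.+1.
Local Notation V := (vidx n).
Local Notation mono := ('X_{1..nvar n}).
Local Notation RR := {mpoly K[nvar n]}.
Local Open Scope ring_scope.

Definition NN : 'I_n := ord_max.

Lemma x_nat (i j : nat) : (i < n)%N -> (j < n)%N ->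
  x K n i j = 'X_(rk (mkv (inord i) (inord j))).
Proof. by move=> hi hj; rewrite -x_ord !inordK. Qed.

Definition fA (p : nat * nat) : mono :=
  (U_(rk (mkv (inord p.1) (inord p.2))) + U_(rk (mkv NN NN)))%MM.
Definition fB (p : nat * nat) : mono :=
  (U_(rk (mkv (inord p.1) NN)) + U_(rk (mkv (inord p.2) NN)))%MM.

Definition fac (p : nat * nat) : RR :=
  x K n p.1 p.2 * x K n m m + x K n p.1 m * x K n p.2 m.

Lemma facE p : (p.1 < m)%N -> (p.2 < m)%N -> fac p = 'X_[fA p] + 'X_[fB p].
Proof.
move=> h1 h2; rewrite /fac /fA /fB !mpolyXD !x_nat //; try lia.
have eN : inord m = NN by apply: val_inj; rewrite /= inordK.
by rewrite eN.
Qed.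

Lemma vdeg_fAB p k : vdeg (fA p) k = vdeg (fB p) k.
Proof. rewrite /fA /fB !vdegD !vdeg1mkv; lia. Qed.

Lemma U_fA p (a b : 'I_n) : (p.1 < p.2)%N -> (p.2 < m)%N -> (a < b)%N -> (b < m)%N ->
  U (fA p) a b = ((p.1 == a) && (p.2 == b) : nat).
Proof.
move=> h1 h2 hab hb; rewrite /fA UD !U1 mkv_diag_off // addn0.
rewrite U_mkv_eq //; last by rewrite !inordK; lia.
by rewrite -!(inj_eq val_inj) /= !inordK //; lia.
Qed.

Lemma U_fB p (a b : 'I_n) : (p.1 < p.2)%N -> (p.2 < m)%N -> (a < b)%N -> (b < m)%N ->
  U (fB p) a b = 0%N.
Proof.
move=> h1 h2 hab hb; rewrite /fB UD !U1 !U_mkv_eq //; try (rewrite /= ?inordK; lia).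
have -> : (NN == b) = false by apply/negbTE; rewrite -(inj_eq val_inj) /=; lia.
by rewrite !andbF.
Qed.

Definition FL (L : seq (nat * nat)) : RR := \prod_(p <- L) fac p.

Lemma base_sim (u v : mono) : (forall k, vdeg u k = vdeg v k) ->
  (forall a b : 'I_n, (a < b)%N -> (b < m)%N -> odd (U u a b) = odd (U v a b)) ->
  sim u v.
Proof.
move=> hd hp; split => // a b hab.
case: (ltnP b m) => hb; first exact: hp.
have hbN : b = NN by apply: val_inj => /=; have := ltn_ord b; lia.
subst b.
have := congr1 odd (hd a); rewrite !vdegU !oddD !odd_double /=.
have haN : a != NN by apply/eqP => e; rewrite e ltnn in hab.
rewrite (bigD1 NN) 1?eq_sym //= [in X in _ = X -> _](bigD1 NN) 1?eq_sym //=.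
rewrite !oddD.
rewrite (@odd_sum_eq _ _ _ (fun c => U u a c) (fun c => U v a c)).
  by case: (odd (U u a NN)); case: (odd (U v a NN)); case: (odd _).
move=> c /andP [hca hcN].
case: (ltngtP a c) => h.
- apply: hp => //; have := ltn_ord c; move: hcN; rewrite -(inj_eq val_inj) /=; lia.
- by rewrite UC (UC v); apply: hp => //; have := ltn_ord a; lia.
- by move: hca; rewrite (val_inj h) eqxx.
Qed.

Lemma indL (L : seq (nat * nat)) : all (fun p => (p.1 < p.2)%N && (p.2 < m)%N) L ->
  forall u v : mono, (forall k, vdeg u k = vdeg v k) ->
  (forall a b : 'I_n, (a < b)%N -> (b < m)%N -> odd (U u a b) != odd (U v a b) ->
      ((a : nat), (b : nat)) \in L) ->
  inJ (FL L * 'X_[u] - FL L * 'X_[v]).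
Proof.
elim: L => [|p L IH] /=.
  move=> _ u v hd hp; rewrite /FL big_nil !mul1r; apply: class_J.
  apply: base_sim => // a b hab hb; apply/eqP; apply: contraTT isT => h.
  by have := hp a b hab hb h.
move=> /andP [/andP [h1 h2] hL] u v hd hp.
rewrite /FL big_cons -/(FL L) facE //; last by lia.
have hdAB := vdeg_fAB p.
case: (boolP (odd (U u (inord p.1) (inord p.2)) != odd (U v (inord p.1) (inord p.2)))) => hD.
  have -> : ('X_[fA p] + 'X_[fB p]) * FL L * 'X_[u] - ('X_[fA p] + 'X_[fB p]) * FL L * 'X_[v]
     = (FL L * 'X_[(u + fA p)%MM] - FL L * 'X_[(v + fB p)%MM])
       + (FL L * 'X_[(u + fB p)%MM] - FL L * 'X_[(v + fA p)%MM]).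
    rewrite !mpolyXD; ring.
  apply: inJD; apply: IH => //.
  by move=> k; rewrite (vdegD u) (vdegD v) hd hdAB.
  move=> a b hab hb; rewrite (UD u) (UD v) U_fA // U_fB // => h.
  case: (boolP ((p.1 == a) && (p.2 == b))) => E; last first.
    rewrite (negbTE E) ?addn0 in h.
    have := hp a b hab hb h; rewrite inE => /orP [/eqP E'|//].
    by move: E; rewrite -E' /= !eqxx.
  exfalso; move: hD h; rewrite E.
  case/andP: E => /eqP e1 /eqP e2.
  have -> : inord p.1 = a by apply: val_inj; rewrite /= inordK ?e1 //; lia.
  have -> : inord p.2 = b by apply: val_inj; rewrite /= inordK ?e2 //; lia.
  by rewrite ?addn0 ?addn1 /=; case: (odd _); case: (odd _).
  by move=> k; rewrite (vdegD u) (vdegD v) hd hdAB.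
  move=> a b hab hb; rewrite (UD u) (UD v) U_fA // U_fB // => h.
  case: (boolP ((p.1 == a) && (p.2 == b))) => E; last first.
    rewrite (negbTE E) ?addn0 in h.
    have := hp a b hab hb h; rewrite inE => /orP [/eqP E'|//].
    by move: E; rewrite -E' /= !eqxx.
  exfalso; move: hD h; rewrite E.
  case/andP: E => /eqP e1 /eqP e2.
  have -> : inord p.1 = a by apply: val_inj; rewrite /= inordK ?e1 //; lia.
  have -> : inord p.2 = b by apply: val_inj; rewrite /= inordK ?e2 //; lia.
  by rewrite ?addn0 ?addn1 /=; case: (odd _); case: (odd _).
have -> : ('X_[fA p] + 'X_[fB p]) * FL L * 'X_[u] - ('X_[fA p] + 'X_[fB p]) * FL L * 'X_[v]
   = (FL L * 'X_[(u + fA p)%MM] - FL L * 'X_[(v + fA p)%MM])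
     + (FL L * 'X_[(u + fB p)%MM] - FL L * 'X_[(v + fB p)%MM]).
  rewrite !mpolyXD; ring.
apply: inJD; apply: IH => //.
  by move=> k; rewrite (vdegD u) (vdegD v) hd.
  move=> a b hab hb; rewrite (UD u) (UD v) U_fA // => h.
  case: (boolP ((p.1 == a) && (p.2 == b))) => E; last first.
    rewrite (negbTE E) ?addn0 in h.
    have := hp a b hab hb h; rewrite inE => /orP [/eqP E'|//].
    by move: E; rewrite -E' /= !eqxx.
  exfalso; move: hD h; rewrite E.
  case/andP: E => /eqP e1 /eqP e2.
  have -> : inord p.1 = a by apply: val_inj; rewrite /= inordK ?e1 //; lia.
  have -> : inord p.2 = b by apply: val_inj; rewrite /= inordK ?e2 //; lia.
  by rewrite ?addn0 ?addn1 /=; case: (odd _); case: (odd _).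
  by move=> k; rewrite (vdegD u) (vdegD v) hd.
move=> a b hab hb; rewrite (UD u) (UD v) U_fB // !addn0 => h.
have := hp a b hab hb h; rewrite inE => /orP [/eqP E|//].
exfalso; move: hD h.
have e1 : p.1 = a by rewrite -E.
have e2 : p.2 = b by rewrite -E.
have -> : inord p.1 = a by apply: val_inj; rewrite /= inordK ?e1 //; lia.
have -> : inord p.2 = b by apply: val_inj; rewrite /= inordK ?e2 //; lia.
by move=> /negbTE ->.
Qed.

End Pn.


Section Proj.
Variable K : fieldType.
Variable n : nat.
Local Notation V := (vidx n).
Local Notation mono := ('X_{1..nvar n}).
Local Notation RR := {mpoly K[nvar n]}.
Local Open Scope ring_scope.

Definition isdeg (b : 'I_n -> nat) (u : mono) : bool := [forall k, vdeg u k == b k].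

Definition proj b (f : RR) : RR := \sum_(w <- msupp f) (f@_w * (isdeg b w)%:R) *: 'X_[w].

Lemma coef_sum_supp (f : RR) (g : mono -> K) w :
  (\sum_(w' <- msupp f) g w' *: 'X_[w'] : RR)@_w = if w \in msupp f then g w else 0.
Proof.
rewrite raddf_sum /=.
under eq_bigr do rewrite mcoeffZ mcoeffX.
case: ifP => hw.
  rewrite (bigD1_seq w) ?msupp_uniq //= eqxx mulr1 big1 ?addr0 // => w' hw'.
  by rewrite (negbTE hw') mulr0.
rewrite big1_seq // => w' /andP [_ hw']; case: eqP => [e|_]; last by rewrite mulr0.
by move: hw; rewrite -e hw'.
Qed.

Lemma proj_coef b f w : (proj b f)@_w = f@_w * (isdeg b w)%:R.
Proof.
rewrite /proj coef_sum_supp; case: ifP => // hw.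
by move: hw; rewrite mcoeff_msupp => /negbFE/eqP ->; rewrite mul0r.
Qed.

Lemma projD b f g : proj b (f + g) = proj b f + proj b g.
Proof. by apply/mpolyP => w; rewrite mcoeffD !proj_coef mcoeffD mulrDl. Qed.
Lemma projZ b c f : proj b (c *: f) = c *: proj b f.
Proof. by apply/mpolyP => w; rewrite mcoeffZ !proj_coef mcoeffZ mulrA. Qed.
Lemma projN b f : proj b (- f) = - proj b f.
Proof. by apply/mpolyP => w; rewrite mcoeffN !proj_coef mcoeffN mulNr. Qed.
Lemma proj0 b : proj b 0 = 0.
Proof. by apply/mpolyP => w; rewrite proj_coef mcoeff0 mul0r. Qed.
Lemma projX b w : proj b 'X_[w] = (isdeg b w)%:R *: 'X_[w].
Proof.
apply/mpolyP => z; rewrite proj_coef mcoeffZ !mcoeffX.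
by case: eqP => [->|]; rewrite ?mulr1 ?mul1r ?mulr0 ?mul0r.
Qed.
Lemma proj_sum b (I : Type) (r : seq I) (P : pred I) (F : I -> RR) :
  proj b (\sum_(i <- r | P i) F i) = \sum_(i <- r | P i) proj b (F i).
Proof.
elim: r => [|a r IH]; first by rewrite !big_nil proj0.
by rewrite !big_cons; case: ifP => // _; rewrite projD IH.
Qed.

Lemma homog_proj b f : vhomog b f -> proj b f = f.
Proof.
move=> h; apply/mpolyP => w; rewrite proj_coef.
case: (eqVneq f@_w 0) => [->|nz]; first by rewrite mul0r.
suff -> : isdeg b w by rewrite mulr1.
by apply/forallP => k; rewrite (h w nz k).
Qed.

Lemma mulX_expand (c : RR) (P : mono) :
  c * 'X_[P] = \sum_(w <- msupp c) c@_w *: 'X_[(w + P)%MM].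
Proof.
rewrite {1}(mpolyE c) mulr_suml; apply: eq_bigr => w _.
by rewrite -scalerAl mpolyXD.
Qed.

Definition isdegw (b : 'I_n -> nat) (P : mono) (w : mono) : bool :=
  [forall k, vdeg w k + vdeg P k == b k]%N.

Lemma isdeg_add b P w : isdeg b (w + P)%MM = isdegw b P w.
Proof. by apply: eq_forallb => k; rewrite vdegD. Qed.

Lemma projMX b (c : RR) (P : mono) :
  proj b (c * 'X_[P]) =
  (\sum_(w <- msupp c) (c@_w * (isdegw b P w)%:R) *: 'X_[w]) * 'X_[P].
Proof.
rewrite mulX_expand proj_sum mulr_suml; apply: eq_bigr => w _.
rewrite projZ projX -scalerAl -mpolyXD isdeg_add scalerA; congr (_ *: _); exact: mulrC.
Qed.

Lemma isdegw_vdeg b P Q w : (forall k, vdeg P k = vdeg Q k) -> isdegw b P w = isdegw b Q w.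
Proof. by move=> h; apply: eq_forallb => k; rewrite h. Qed.

Lemma proj_J b (g : RR) : inJ g -> inJ (proj b g).
Proof.
move=> [c ->]; rewrite proj_sum; apply: inJ_sum => i _.
rewrite proj_sum; apply: inJ_sum => j hij.
set P : mono := (U_(rk (mkv i i)) + U_(rk (mkv j j)))%MM.
set Q : mono := (U_(rk (mkv i j)) + U_(rk (mkv i j)))%MM.
have hm : minor2 K n i j = 'X_[P] - 'X_[Q].
  by rewrite /minor2 !x_ord /P /Q !mpolyXD expr2.
have hPQ : forall k, vdeg P k = vdeg Q k.
  by move=> k; rewrite /P /Q !vdegD !vdeg1mkv; lia.
rewrite hm mulrBr projD projN !projMX.
have hs : \sum_(w <- msupp (c i j)) ((c i j)@_w * (isdegw b Q w)%:R) *: 'X_[w]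
   = \sum_(w <- msupp (c i j)) ((c i j)@_w * (isdegw b P w)%:R) *: 'X_[w] :> RR.
  by apply: eq_bigr => w _; rewrite (isdegw_vdeg b w hPQ).
rewrite hs -mulrBr -hm; exact: inJ_gen.
Qed.

End Proj.


Section Hilb.
Variable K : fieldType.
Variable n : nat.
Local Notation V := (vidx n).
Local Notation mono := ('X_{1..nvar n}).
Local Notation RR := {mpoly K[nvar n]}.
Local Open Scope ring_scope.

Definition isdegd (b d : 'I_n -> nat) (w : mono) : bool :=
  [forall k, vdeg w k + d k == b k]%N.

Lemma proj_Xp b d (p : RR) w : vhomog d p ->
  proj b ('X_[w] * p) = (isdegd b d w)%:R *: ('X_[w] * p).
Proof.
move=> hp; apply/mpolyP => z; rewrite proj_coef mcoeffZ.
case: (eqVneq ('X_[w] * p)@_z 0) => [->|nz]; first by rewrite mul0r mulr0.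
have : z \in msupp ('X_[w] * p) by rewrite mcoeff_msupp.
move/msuppM_le; rewrite msuppX => /allpairsP [[m1 m2] [/= h1 h2 ->]].
move: h1; rewrite mem_seq1 => /eqP ->.
rewrite mulrC; congr (_ * _); congr ((nat_of_bool _)%:R).
have hm2 : forall k, vdeg m2 k = d k by move: h2; rewrite mcoeff_msupp => /hp.
rewrite /isdeg /isdegd.
by apply/idP/idP => /forallP h; apply/forallP => k; move: (h k); rewrite vdegD hm2.
Qed.

Lemma step_red b d (p : RR) (f : RR) : vhomog d p -> vhomog b f -> inGen p f ->
  exists a : RR, inJ (f - \sum_(w <- msupp a | isdegd b d w) a@_w *: ('X_[w] * p)).
Proof.
move=> hp hf [a [g [hfe hg]]]; exists a.
have -> : f - \sum_(w <- msupp a | isdegd b d w) a@_w *: ('X_[w] * p) = proj b g.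
  rewrite -{1}(homog_proj hf) hfe projD.
  rewrite {1}(mpolyE a) mulr_suml proj_sum.
  rewrite (eq_bigr (fun w => a@_w *: (((isdegd b d w)%:R : K) *: ('X_[w] * p)))); last first.
    by move=> w _; rewrite -scalerAl projZ (proj_Xp b w hp).
  rewrite [X in _ - X]big_mkcond /=.
  rewrite (eq_bigr (fun w => if isdegd b d w then a@_w *: ('X_[w] * p) else 0)) /=.
    by rewrite addrC addKr.
  move=> w _; case: (isdegd b d w); first by rewrite scale1r.
  by rewrite scale0r scaler0.
exact: proj_J.
Qed.

Lemma collapse b d (p : RR) (w0 : mono) (a : RR) :
  (forall u v : mono, (forall k, vdeg u k = vdeg v k) -> inJ ('X_[u] * p - 'X_[v] * p)) ->
  isdegd b d w0 ->
  inJ (\sum_(w <- msupp a | isdegd b d w) a@_w *: ('X_[w] * p)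
       - (\sum_(w <- msupp a | isdegd b d w) a@_w) *: ('X_[w0] * p)).
Proof.
move=> hP h0; rewrite scaler_suml -sumrB; apply: inJ_sum => w hw.
rewrite -scalerBr; apply: inJZ; apply: hP => k.
move/forallP/(_ k)/eqP: hw; move/forallP/(_ k)/eqP: h0; lia.
Qed.

Lemma hilb01_of (p : RR) d : vhomog d p ->
  (forall u v : mono, (forall k, vdeg u k = vdeg v k) -> inJ ('X_[u] * p - 'X_[v] * p)) ->
  hilb01 p.
Proof.
move=> hp hP b.
have key : ~ exists f : 'I_2 -> RR, indep_family p b f.
  move=> [f [hf hind]].
  pose l0 : 'I_2 := ord0; pose l1 : 'I_2 := ord_max.
  have [a0 h0] := step_red hp (hf l0).1 (hf l0).2.
  have [a1 h1] := step_red hp (hf l1).1 (hf l1).2.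
  have [Q [e0 [e1 [j0 j1]]]] : exists Q : RR, exists e0 e1 : K,
      inJ (f l0 - e0 *: Q) /\ inJ (f l1 - e1 *: Q).
    case: (boolP (has (isdegd b d) (msupp a0 ++ msupp a1))).
      move=> /hasP [w0 _ hw0].
      exists ('X_[w0] * p).
      exists (\sum_(w <- msupp a0 | isdegd b d w) a0@_w).
      exists (\sum_(w <- msupp a1 | isdegd b d w) a1@_w).
      split.
        have := inJD h0 (collapse a0 hP hw0).
        by rewrite addrA subrK.
      have := inJD h1 (collapse a1 hP hw0).
      by rewrite addrA subrK.
    rewrite has_cat negb_or => /andP [n0 n1].
    exists 0, 0, 0; rewrite !scaler0 !subr0; split.
      move: h0; rewrite big1_seq ?subr0 // => w /andP [hw hw']. 
      by move/hasPn: n0 => /(_ w hw'); rewrite hw.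
    move: h1; rewrite big1_seq ?subr0 // => w /andP [hw hw'].
    by move/hasPn: n1 => /(_ w hw'); rewrite hw.
  have sum2 : forall c : 'I_2 -> K, \sum_(l < 2) c l *: f l = c l0 *: f l0 + c l1 *: f l1.
    move=> c; rewrite big_ord_recr big_ord1 /=.
    by have -> : widen_ord (leqnSn 1) ord0 = l0 by apply: val_inj.
  case: (eqVneq e0 0) => [E|E].
    pose c : 'I_2 -> K := fun l => if (l : nat) == 0%N then 1 else 0.
    have := hind c; rewrite sum2 /c /= scale1r scale0r addr0.
    move: j0; rewrite E scale0r subr0 => j0 /(_ j0 l0) /=.
    by move/eqP; rewrite oner_eq0.
  pose c : 'I_2 -> K := fun l => if (l : nat) == 0%N then e1 else - e0.
  have := hind c; rewrite sum2 /c /=.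
  have : inJ (e1 *: (f l0 - e0 *: Q) - e0 *: (f l1 - e1 *: Q)).
    by apply: inJB; apply: inJZ.
  have -> : e1 *: (f l0 - e0 *: Q) - e0 *: (f l1 - e1 *: Q) = e1 *: f l0 + - e0 *: f l1.
    by rewrite !scalerBr !scalerA mulrC scaleNr opprB addrA subrK addrC.
  move=> hJ /(_ hJ l1) /=.
  by move/eqP; rewrite oppr_eq0 (negbTE E).
case: (classic (exists f : 'I_1 -> RR, indep_family p b f)) => H.
  by right; split.
left; split => //.
exists (fun _ => 0); split.
  by case.
by move=> c _ [].
Qed.

End Hilb.


Section Homog.
Variable K : fieldType.
Variable n : nat.
Local Notation mono := ('X_{1..nvar n}).
Local Notation RR := {mpoly K[nvar n]}.
Local Open Scope ring_scope.

Lemma vhomogX (u : mono) : vhomog (vdeg u) ('X_[u] : RR).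
Proof. by move=> w; rewrite -mcoeff_msupp msuppX mem_seq1 => /eqP ->. Qed.

Lemma vhomogD b (f g : RR) : vhomog b f -> vhomog b g -> vhomog b (f + g).
Proof.
move=> hf hg w; rewrite mcoeffD => h.
case: (eqVneq f@_w 0) => [e|nz]; last exact: hf.
by apply: hg; move: h; rewrite e add0r.
Qed.

Lemma vhomog0 b : vhomog b (0 : RR).
Proof. by move=> w; rewrite mcoeff0 eqxx. Qed.

Lemma vhomogZ b c (f : RR) : vhomog b f -> vhomog b (c *: f).
Proof.
move=> hf w; rewrite mcoeffZ => h; apply: hf.
by apply: contraNneq h => ->; rewrite mulr0.
Qed.

Lemma vhomog_sum b (I : Type) (r : seq I) (P : pred I) (F : I -> RR) :
  (forall i, P i -> vhomog b (F i)) -> vhomog b (\sum_(i <- r | P i) F i).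
Proof.
move=> h; elim: r => [|a r IH]; first by rewrite big_nil; exact: vhomog0.
by rewrite big_cons; case: ifP => // Pa; apply: vhomogD => //; apply: h.
Qed.

Lemma vhomogM b c (f g : RR) : vhomog b f -> vhomog c g ->
  vhomog (fun k => b k + c k)%N (f * g).
Proof.
move=> hf hg w h k.
have : w \in msupp (f * g) by rewrite mcoeff_msupp.
move/msuppM_le => /allpairsP [[m1 m2] [/= h1 h2 ->]].
rewrite vdegD.
move: h1 h2; rewrite !mcoeff_msupp => h1 h2.
by rewrite (hf _ h1) (hg _ h2).
Qed.

Lemma vhomog1 : vhomog (fun _ => 0%N) (1 : RR).
Proof.
move=> w; rewrite -mpolyX0 -mcoeff_msupp msuppX mem_seq1 => /eqP -> k.
exact: vdeg0.
Qed.

End Homog.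

Section PnFinal.
Variable K : fieldType.
Variable m : nat.
Local Notation n := m.+1.
Local Notation mono := ('X_{1..nvar n}).
Local Notation RR := {mpoly K[nvar n]}.
Local Open Scope ring_scope.

Definition Lpn : seq (nat * nat) :=
  flatten [seq [seq (i, j) | i <- iota 0 j] | j <- iota 0 m].

Lemma pnE : pn K n = FL K m Lpn.
Proof.
rewrite /pn /FL /Lpn big_flatten /= big_map /index_iota subn0.
by apply: eq_bigr => j _; rewrite big_map subn0.
Qed.

Lemma Lpn_valid : all (fun p => (p.1 < p.2)%N && (p.2 < m)%N) Lpn.
Proof.
apply/allP => p /flatten_mapP [j]; rewrite mem_iota => hj /mapP [i].
by rewrite mem_iota => hi ->; apply/andP; split => /=; lia.
Qed.

Lemma FL_homog L : all (fun p => (p.1 < p.2)%N && (p.2 < m)%N) L ->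
  exists d, vhomog d (FL K m L).
Proof.
elim: L => [|p L IH] /=.
  by exists (fun _ => 0%N); rewrite /FL big_nil; exact: vhomog1.
move=> /andP [/andP [h1 h2] /IH [d hd]].
exists (fun k => vdeg (fA m p) k + d k)%N.
rewrite /FL big_cons -/(FL K m L) facE //; last by lia.
apply: vhomogM => //; apply: vhomogD; first exact: vhomogX.
move=> w hw k; rewrite (vhomogX hw k); by rewrite vdeg_fAB.
Qed.

Lemma hilb01_pn : hilb01 (pn K n).
Proof.
have [d hd] := FL_homog Lpn_valid.
rewrite pnE; apply: (hilb01_of hd) => u v huv.
rewrite ![_ * FL K m Lpn]mulrC; apply: indL => //.
  exact: Lpn_valid.
move=> a b hab hb _; apply/flatten_mapP; exists (b : nat); first by rewrite mem_iota.
by apply/mapP; exists (a : nat) => //; rewrite mem_iota.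
Qed.

End PnFinal.


Section Plus.
Variable K : fieldType.
Variable n : nat.
Local Notation V := (vidx n).
Local Notation mono := ('X_{1..nvar n}).
Local Notation RR := {mpoly K[nvar n]}.

Lemma mkv_le (a c : 'I_n) : (a <= c)%N -> val (mkv a c) = (a, c).
Proof. by move=> h; rewrite /mkv /= h. Qed.
Lemma mkv_gt (a c : 'I_n) : (c < a)%N -> val (mkv a c) = (c, a).
Proof. by move=> h; rewrite /mkv /= leqNgt h. Qed.

Lemma exists_w (b : 'I_n -> nat) (P : 'I_n -> 'I_n -> bool) :
  (forall a c, P a c = P c a) -> (forall k, P k k = false) ->
  (forall k, (\sum_(c < n) P k c <= b k)%N /\ odd (\sum_(c < n) P k c) = odd (b k)) ->
  exists w : mono, in_fiber b w /\ forall a c : 'I_n, a != c -> U w a c = P a c.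
Proof.
move=> Psym Pdiag hb.
pose W (t : V) : nat := if (val t).1 == (val t).2
   then ((b (val t).1 - \sum_(c < n) P (val t).1 c)./2)%N else P (val t).1 (val t).2.
pose w : mono := [multinom W (enum_val s) | s < nvar n].
have hU : forall a c, U w a c = W (mkv a c).
  by move=> a c; rewrite /U mnmE /rk enum_rankK.
have hoff : forall a c : 'I_n, a != c -> U w a c = P a c.
  move=> a c hac; rewrite hU /W.
  have -> : ((val (mkv a c)).1 == (val (mkv a c)).2) = false by apply/negbTE; rewrite mkv_off.
  case: (leqP a c) => h; first by rewrite mkv_le.
  by rewrite mkv_gt // Psym.
exists w; split => // k.
rewrite vdegU hU /W mkv_le // eqxx /=.
have hs : (\sum_(c | c != k) U w k c = \sum_(c < n) P k c)%N.
  rewrite [RHS](bigD1 k) //= Pdiag add0n.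
  by apply: eq_bigr => c hc; rewrite hoff // eq_sym.
rewrite hs.
have [hle hpar] := hb k.
have := odd_double_half (b k - \sum_(c < n) P k c).
rewrite oddB // hpar addbb add0n => ->.
by rewrite subnK.
Qed.

Lemma odd_sum_addb (I : Type) (r : seq I) (Q : pred I) (F : I -> nat) :
  odd (\sum_(i <- r | Q i) F i) = \big[addb/false]_(i <- r | Q i) odd (F i).
Proof. exact: (big_morph odd oddD). Qed.

Definition good (u v s s' : mono) : bool :=
  [forall a : 'I_n, forall c : 'I_n, (a < c)%N ==>
     (odd (U s' a c) == odd (U s a c) (+) odd (U u a c) (+) odd (U v a c))].

End Plus.

Section PlusFinal.
Variable K : fieldType.
Variable m : nat.
Local Notation n := m.+1.
Local Notation V := (vidx n).
Local Notation mono := ('X_{1..nvar n}).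
Local Notation RR := {mpoly K[nvar n]}.

Lemma good_exists (i : 'I_n) (S : seq mono) : (1 <= m)%N -> class_reps (plus_deg i) S ->
  forall u v : mono, (forall k, vdeg u k = vdeg v k) ->
  forall s, s \in S -> has (good u v s) S.
Proof.
move=> hm [hu hin hrep huniq] u v huv s hs.
pose P (a c : 'I_n) : bool :=
  if a == c then false else odd (U s a c) (+) odd (U u a c) (+) odd (U v a c).
have [w [hw hwP]] : exists w : mono, in_fiber (plus_deg i) w /\
    forall a c : 'I_n, a != c -> U w a c = P a c.
  apply: exists_w.
  - move=> a c; rewrite /P eq_sym; case: eqP => // _.
    by rewrite (UC s) (UC u) (UC v).
  - by move=> k; rewrite /P eqxx.
  move=> k.
  set D := (\sum_(c < n) P k c)%N.
  have hD : D = (\sum_(c | c != k) (odd (U s k c) (+) odd (U u k c) (+) odd (U v k c) : nat))%N.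
    rewrite /D (bigD1 k) //= /P eqxx add0n; apply: eq_bigr => c hc.
    by rewrite eq_sym (negbTE hc).
  have hpar : odd D = odd (plus_deg i k).
    rewrite hD odd_sum_addb.
    under eq_bigr do rewrite oddb.
    rewrite !big_split /= -!odd_sum_addb.
    have := congr1 odd (huv k); rewrite !vdegU !oddD !odd_double /= => ->.
    rewrite -(hin s hs k) vdegU oddD odd_double /=.
    by rewrite -addbA addbb addbF.
  have hDm : (D <= m)%N.
    rewrite hD; apply: (@leq_trans (\sum_(c < n | c != k) 1)%N).
      by apply: leq_sum => c _; exact: leq_b1.
    have e : (\sum_(c < n) 1 = n)%N by rewrite sum1_card card_ord.
    by rewrite (bigD1 k) //= add1n in e; move/succn_inj: e => e'; rewrite -[X in _ <= X]e'.
  have hpd : (m - 1 <= plus_deg i k)%N by rewrite /plus_deg; case: ifP; lia.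
  split => //.
  have := modn2 D; have := modn2 (plus_deg i k); rewrite hpar; lia.
have [s' hs' he] := hrep w hw.
apply/hasP; exists s' => //; apply/forallP => a; apply/forallP => c; apply/implyP => hac.
have hne : a != c by apply/eqP => e; rewrite e ltnn in hac.
have := equivL_par he (t := mkv a c); rewrite mkv_off hne => /(_ isT).
rewrite -/(U w a c) -/(U s' a c) hwP // /P (negbTE hne) oddb => <-.
by rewrite eqxx.
Qed.

Local Open Scope ring_scope.

Lemma hilb01_plus (i : 'I_n) (S : seq mono) : (1 <= m)%N -> class_reps (plus_deg i) S ->
  hilb01 (\sum_(s <- S) 'X_[s] : RR).
Proof.
move=> hm hc; have [hu hin hrep huniq] := hc.
have hhom : vhomog (plus_deg i) (\sum_(s <- S) 'X_[s] : RR).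
  rewrite big_seq; apply: vhomog_sum => s hs w hw k.
  by rewrite (vhomogX hw k); exact: hin.
apply: (hilb01_of hhom) => u v huv.
have hex := good_exists hm hc huv.
pose sg s := nth s S (find (good u v s) S).
have sgS : forall s, s \in S -> sg s \in S.
  by move=> s hs; apply: mem_nth; rewrite -has_find; exact: hex.
have sgG : forall s, s \in S -> good u v s (sg s).
  by move=> s hs; apply: nth_find; exact: hex.
have par : forall s, s \in S -> forall a c : 'I_n, (a < c)%N ->
    odd (U (sg s) a c) = odd (U s a c) (+) odd (U u a c) (+) odd (U v a c).
  move=> s hs a c hac.
  by move/forallP/(_ a)/forallP/(_ c)/implyP/(_ hac)/eqP: (sgG s hs).
have sginj : {in S &, injective sg}.
  move=> s1 s2 h1 h2 e; apply: huniq => //; apply: (class_E K); split.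
    by move=> k; rewrite (hin _ h1) (hin _ h2).
  move=> a c hac; have E1 := par _ h1 a c hac; have E2 := par _ h2 a c hac.
  rewrite e in E1; have := etrans (esym E1) E2.
  by case: (odd (U s1 a c)); case: (odd (U s2 a c)); case: (odd (U u a c)); case: (odd (U v a c)).
have hperm : perm_eq (map sg S) S.
  have hU : uniq (map sg S) by rewrite map_inj_in_uniq.
  apply: uniq_perm => //.
  apply: (uniq_min_size hU _ _).2.
    by move=> x /mapP [s hs ->]; exact: sgS.
  by rewrite size_map.
rewrite mulr_sumr [X in _ - X]mulr_sumr.
rewrite -[X in _ - X](perm_big _ hperm) big_map -sumrB big_seq.
apply: inJ_sum => s hs.
rewrite -!mpolyXD; apply: class_J; split.
  by move=> k; rewrite !vdegD (hin _ hs) (hin _ (sgS _ hs)) huv.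
move=> a c hac; rewrite !UD !oddD par //.
by case: (odd (U s a c)); case: (odd (U u a c)); case: (odd (U v a c)).
Qed.

End PlusFinal.

Unset Implicit Arguments. Set Strict Implicit.
Local Open Scope ring_scope.

Theorem lemma2p19 (K : fieldType) (n : nat) : (2 <= n)%N ->
  hilb01 (pn K n) /\
  (forall (i : 'I_n) (S : seq ('X_{1..nvar n})),
      class_reps (plus_deg i) S ->
      hilb01 (\sum_(s <- S) ('X_[s] : {mpoly K[nvar n]}))).
Proof.
case: n => [|n1].
  by [].
move=> hn.
split; first exact: hilb01_pn.
move=> i S hS; exact: hilb01_plus hn hS.
Qed.
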